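(* For any set of positions $P\subseteq\mathsf{Pos}(R)$ and any character $\alpha$: (i) $\displaystyle \delta(P,\alpha)=\bigcup_{v\in\tilde N^\odot(P,\alpha)}\delta^\odot(v,\alpha)\;\cup\;\bigcup_{v\in\tilde N^\ast(P,\alpha)}\delta^\ast(v,\alpha)$; (ii) $\delta^\odot(u,\alpha)\cap\delta^\odot(v,\alpha)=\emptyset$ for any two distinct $u,v\in\tilde N^\odot(P,\alpha)$, and $\delta^\ast(u,\alpha)\cap\delta^\ast(v,\alpha)=\emptyset$ for any two distinct $u,v\in\tilde N^\ast(P,\alpha)$; (iii) $\delta^\odot(v,\alpha)\neq\emptyset$ for every $v\in\tilde N^\odot(P,\alpha)$ and $\delta^\ast(v,\alpha)\neq\emptyset$ for every $v\in\tilde N^\ast(P,\alpha)$.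
   Context: A regular expression $R$ over $\Sigma$ (built from $\epsilon$ and characters using $\odot$, $\mid$, $\ast$) is identified with its parse tree; $\odot$- and $\mid$-nodes $v$ have children $\mathsf{left}(v),\mathsf{right}(v)$, a $\ast$-node has one child. Positions $\mathsf{Pos}(R)$ are the character-labeled leaves, $\mathsf{Pos}_\alpha$ those labeled $\alpha$. For a node $v$, $\mathsf{first}(v)$, $\mathsf{last}(v)$ are the sets of positions occurring first/last in a sequence of positions generated by the subexpression rooted at $v$ (leaves treated as distinct symbols); $\mathsf{follow}(R,p)$ is the set of positions that can immediately follow $p$ in a sequence generated by $R$. $\mathsf{firstextent}(p)=\{v: p\in\mathsf{first}(v)\}$, $\mathsf{lastextent}(p)=\{v:p\in\mathsf{last}(v)\}$, and for a set $X$ of positions $\mathsf{firstextent}(X)=\bigcup_{p\in X}\mathsf{firstextent}(p)$, similarly $\mathsf{lastextent}(X)$. State-set transition (ignoring the start state): $\delta(P,\alpha)=\{q\in\mathsf{Pos}_\alpha : q\in\mathsf{follow}(R,p)\text{ for some }p\in P\}$. $\mathsf{lca}$ denotes lowest common ancestor; $\mathsf{lca}(P,\mathsf{Pos}_\alpha)=\{\mathsf{lca}(p,q):p\in P,q\in\mathsf{Pos}_\alpha\}$. $\mathsf{parent}^\ast(v)$ is the lowest ancestor of $v$ (including $v$ itself) that is a $\ast$-node, extended to sets elementwise. Internal transitions: for a $\odot$-node $v$, $\delta^\odot(v,\alpha)=\{q\in\mathsf{Pos}_\alpha:\mathsf{right}(v)\in\mathsf{firstextent}(q)\}$; for a node $v$,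 $\delta^\ast(v,\alpha)=\{q\in\mathsf{Pos}_\alpha:\mathsf{parent}^\ast(v)\in\mathsf{firstextent}(q)\}$. Transition nodes: $N^\odot(P,\alpha)$ is the set of $\odot$-nodes $v$ with $\mathsf{left}(v)\in\mathsf{lastextent}(P)$ and $\mathsf{right}(v)\in\mathsf{firstextent}(\mathsf{Pos}_\alpha)$; $N^\ast(P,\alpha)$ is the set of $\ast$-nodes in $\mathsf{parent}^\ast(\mathsf{lca}(P,\mathsf{Pos}_\alpha))\cap\mathsf{lastextent}(P)\cap\mathsf{firstextent}(\mathsf{Pos}_\alpha)$. A node $v$ is $\ast$-dominated by $u$ if $u$ is a proper ancestor of $v$ and $\mathsf{first}(v)\subseteq\mathsf{first}(u)$; $\tilde N^\ast(P,\alpha)$ is the set of $v\in N^\ast(P,\alpha)$ not $\ast$-dominated by any node of $N^\ast(P,\alpha)$. A node $v$ is $\odot$-dominated by $u$ if $u$ is a proper ancestor of $v$ and $\mathsf{first}(\mathsf{right}(v))\subseteq\mathsf{first}(\mathsf{right}(u))$; $\tilde N^\odot(P,\alpha)$ is the set of $v\in N^\odot(P,\alpha)$ not $\odot$-dominated by any node of $N^\odot(P,\alpha)$. *)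

(* Defs.v *)
(* Regular expressions as parse trees; nodes are
   addressed by paths from the root: [::] is the root, rcons v 0 is the left
   (or only, for a star) child of v, rcons v 1 is the right child of v. *)
From mathcomp Require Import all_boot.
Set Implicit Arguments. Unset Strict Implicit. Unset Printing Implicit Defensive.

Inductive re (A : Type) : Type :=
| Eps : re A
| Chr : A -> re A
| Cat : re A -> re A -> re A
| Alt : re A -> re A -> re A
| Star : re A -> re A.
Arguments Eps {A}.

Definition addr := seq nat.

Section RE.
Variable A : Type.
Implicit Types (R r : re A) (u v p q : addr).

Fixpoint subat R v : option (re A) :=
  match v with
  | [::] => Some R
  | d :: v' =>
      match R, d with
      | Cat r1 _, 0 => subat r1 v'
      | Cat _ r2, 1 => subat r2 v'
      | Alt r1 _, 0 => subat r1 v'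
      | Alt _ r2, 1 => subat r2 v'
      | Star r1, 0 => subat r1 v'
      | _, _ => None
      end
  end.

Definition is_node R v : Prop := exists r, subat R v = Some r.
Definition is_cat R v : Prop := exists r1 r2, subat R v = Some (Cat r1 r2).
Definition is_star R v : Prop := exists r1, subat R v = Some (Star r1).

Definition Pos R p : Prop := exists a, subat R p = Some (Chr a).
Definition Pos_a R (a : A) p : Prop := subat R p = Some (Chr a).

(* gen pre r w : the subexpression r, located at address pre, generates the
   sequence of positions w (leaves treated as distinct symbols). *)
Inductive gen : addr -> re A -> seq addr -> Prop :=
| gen_eps pre : gen pre Eps [::]
| gen_chr pre a : gen pre (Chr a) [:: pre]
| gen_cat pre r1 r2 w1 w2 :
    gen (rcons pre 0) r1 w1 -> gen (rcons pre 1) r2 w2 ->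
    gen pre (Cat r1 r2) (w1 ++ w2)
| gen_altl pre r1 r2 w : gen (rcons pre 0) r1 w -> gen pre (Alt r1 r2) w
| gen_altr pre r1 r2 w : gen (rcons pre 1) r2 w -> gen pre (Alt r1 r2) w
| gen_star0 pre r : gen pre (Star r) [::]
| gen_starS pre r w1 w2 :
    gen (rcons pre 0) r w1 -> gen pre (Star r) w2 ->
    gen pre (Star r) (w1 ++ w2).

Definition first R v p : Prop :=
  exists r, subat R v = Some r /\ exists w, gen v r (p :: w).
Definition last R v p : Prop :=
  exists r, subat R v = Some r /\ exists w, gen v r (rcons w p).

Definition follow R p q : Prop :=
  exists w1 w2, gen [::] R (w1 ++ p :: q :: w2).

Definition firstextent R (X : addr -> Prop) v : Prop := exists p, X p /\ first R v p.
Definition lastextent R (X : addr -> Prop) v : Prop := exists p, X p /\ last R v p.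

Definition ancestor u v : Prop := exists s, v = u ++ s.
Definition proper_ancestor u v : Prop := exists s, s <> [::] /\ v = u ++ s.

Fixpoint lca u v : addr :=
  match u, v with
  | a :: u', b :: v' => if a == b then a :: lca u' v' else [::]
  | _, _ => [::]
  end.

(* pstar R v u : u = parent*(v), the lowest ancestor of v (v included) that is
   a star node (undefined, i.e. no such u, if v has no star ancestor). *)
Definition pstar R v u : Prop :=
  ancestor u v /\ is_star R u /\
  forall u', ancestor u' v -> proper_ancestor u u' -> ~ is_star R u'.

Definition delta R (P : addr -> Prop) (a : A) q : Prop :=
  Pos_a R a q /\ exists p, P p /\ follow R p q.

Definition delta_cat R v (a : A) q : Prop :=
  Pos_a R a q /\ firstextent R (fun p => p = q) (rcons v 1).
Definition delta_star R v (a : A) q : Prop :=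
  Pos_a R a q /\ exists u, pstar R v u /\ firstextent R (fun p => p = q) u.

Definition Ncat R (P : addr -> Prop) (a : A) v : Prop :=
  is_cat R v /\ lastextent R P (rcons v 0) /\ firstextent R (Pos_a R a) (rcons v 1).
Definition Nstar R (P : addr -> Prop) (a : A) v : Prop :=
  is_star R v /\
  (exists p q, P p /\ Pos_a R a q /\ pstar R (lca p q) v) /\
  lastextent R P v /\ firstextent R (Pos_a R a) v.

Definition star_dominated R v u : Prop :=
  proper_ancestor u v /\ forall p, first R v p -> first R u p.
Definition cat_dominated R v u : Prop :=
  proper_ancestor u v /\ forall p, first R (rcons v 1) p -> first R (rcons u 1) p.

Definition Nstar_t R P a v : Prop :=
  Nstar R P a v /\ ~ exists u, Nstar R P a u /\ star_dominated R v u.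
Definition Ncat_t R P a v : Prop :=
  Ncat R P a v /\ ~ exists u, Ncat R P a u /\ cat_dominated R v u.

End RE.

(* Main.v *)
Require Import Defs.
From mathcomp Require Import all_boot zify.
From Stdlib Require Import Classical.

Lemma subat_app {A} (R : re A) u s :
  subat R (u ++ s) = match subat R u with Some r => subat r s | None => None end.
Proof.
elim: u R => [|d u IH] R; first by case: R.
by case: R => [|c|r1 r2|r1 r2|r1]; case: d => [|[|d]] //=; rewrite ?IH //; case: s.
Qed.

Lemma subat_app' {A} (R r : re A) u s : subat R u = Some r -> subat R (u ++ s) = subat r s.
Proof. by move=> H; rewrite subat_app H. Qed.

Lemma gen_pre {A} {pre} {r : re A} {w} : gen pre r w -> forall x, x \in w -> exists t, x = pre ++ t.
Proof.
elim=> {pre r w} //=.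
- by move=> pre _ x; rewrite inE => /eqP ->; exists [::]; rewrite cats0.
- move=> pre r1 r2 w1 w2 _ IH1 _ IH2 x; rewrite mem_cat => /orP[/IH1|/IH2] [t ->];
  by rewrite cat_rcons; eexists.
- by move=> pre r1 r2 w _ IH x /IH [t ->]; rewrite cat_rcons; eexists.
- by move=> pre r1 r2 w _ IH x /IH [t ->]; rewrite cat_rcons; eexists.
- move=> pre r w1 w2 _ IH1 _ IH2 x; rewrite mem_cat => /orP[/IH1|/IH2] [t ->].
    by rewrite cat_rcons; eexists.
  by eexists.
Qed.

Lemma gen_ex {A} (r : re A) pre : exists w, gen pre r w.
Proof.
elim: r pre => [|c|r1 IH1 r2 IH2|r1 IH1 r2 IH2|r1 IH1] pre.
- exists [::]; constructor.
- exists [:: pre]; constructor.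
- have [w1 H1] := IH1 (rcons pre 0); have [w2 H2] := IH2 (rcons pre 1).
  by exists (w1 ++ w2); constructor.
- have [w1 H1] := IH1 (rcons pre 0); exists w1; exact: gen_altl.
- exists [::]; constructor.
Qed.

Lemma embed {A} s (r0 r : re A) pre w : subat r0 s = Some r -> gen (pre ++ s) r w ->
  exists w1 w2, gen pre r0 (w1 ++ w ++ w2).
Proof.
elim: s r0 pre => [|d s IH] r0 pre /=.
  by case: r0 => [|c|r1 r2|r1 r2|r1] /= [<-]; rewrite cats0 => H; exists [::], [::]; rewrite cats0.
rewrite -cat_rcons.
case: r0 => [|c|r1 r2|r1 r2|r1]; case: d => [|[|d]] //= Hs Hg.
- have [w1 [w2 H]] := IH _ _ Hs Hg.
  have [w3 H3] := gen_ex r2 (rcons pre 1).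
  exists w1, (w2 ++ w3); rewrite !catA; rewrite -!catA in H *.
  have := gen_cat H H3; by rewrite -!catA.
- have [w1 [w2 H]] := IH _ _ Hs Hg.
  have [w3 H3] := gen_ex r1 (rcons pre 0).
  exists (w3 ++ w1), w2; rewrite -!catA; exact: gen_cat.
- have [w1 [w2 H]] := IH _ _ Hs Hg. exists w1, w2; exact: gen_altl.
- have [w1 [w2 H]] := IH _ _ Hs Hg. exists w1, w2; exact: gen_altr.
- have [w1 [w2 H]] := IH _ _ Hs Hg. exists w1, w2.
  rewrite -[_ ++ _ ++ _]cats0; apply: gen_starS => //; constructor.
Qed.

Lemma gen_star_app {A} pre (r : re A) w1 w2 :
  gen pre (Star r) w1 -> gen pre (Star r) w2 -> gen pre (Star r) (w1 ++ w2).
Proof.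
move=> H; move: H w2.
move e: (Star r) => t H; elim: H e => //.
move=> pre' r' u1 u2 H1 _ H2 IH2 [e] w2 Hw2; subst r'.
rewrite -catA; apply: gen_starS => //; exact: IH2.
Qed.


Lemma digit {pre : addr} {d c x y} : pre ++ d :: x = pre ++ c :: y -> d = c /\ x = y.
Proof. by elim: pre => [|z pre IH] /= [] // -> ->. Qed.

Lemma nodigit {pre : addr} {d x} : pre = pre ++ d :: x -> False.
Proof.
move/(congr1 size); rewrite size_cat /= => /eqP.
by rewrite -{1}[size pre]addn0 eqn_add2l.
Qed.

Lemma mem_child {A} {pre} {r : re A} {d w x} : gen (rcons pre d) r w -> x \in w -> exists t, x = pre ++ d :: t.
Proof. by move=> H /(gen_pre H) [t ->]; exists t; rewrite cat_rcons. Qed.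

Lemma first_down {A} pre (r : re A) l : gen pre r l ->
  forall q w s t r', l = q :: w -> q = pre ++ s ++ t -> subat r s = Some r' ->
  exists w', gen (pre ++ s) r' (q :: w').
Proof.
elim=> {pre r l}.
- by [].
- move=> pre c q w [|d s] t r' [e1 e2]; subst q w => //=.
  by move=> _ [<-]; rewrite cats0; exists [::]; constructor.
- move=> pre r1 r2 w1 w2 H1 IH1 H2 IH2 q w [|d s] t r' El Eq /=.
    by move=> [<-]; rewrite cats0; exists w; rewrite -El; constructor.
  case: w1 El H1 IH1 => [|q1 w1] /= El H1 IH1.
    subst w2.
  have [t1 Et1] := mem_child H2 (mem_head q w).
  case: (digit (etrans (esym Et1) Eq)) => ed _; subst d => Hs.
  have [w' Hw'] := IH2 q w s t r' erefl (ltac:(by rewrite cat_rcons)) Hs.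
  by exists w'; rewrite -cat_rcons.
  case: El => e1 e2; subst q1.
  have [t1 Et1] := mem_child H1 (mem_head q w1).
  case: (digit (etrans (esym Et1) Eq)) => ed _; subst d => Hs.
  have [w' Hw'] := IH1 q w1 s t r' erefl (ltac:(by rewrite cat_rcons)) Hs.
  by exists w'; rewrite -cat_rcons.
- move=> pre r1 r2 w1 H1 IH1 q w [|d s] t r' El Eq /=.
    by move=> [<-]; rewrite cats0; exists w; apply: gen_altl; rewrite -El.
  subst w1.
  have [t1 Et1] := mem_child H1 (mem_head q w).
  case: (digit (etrans (esym Et1) Eq)) => ed _; subst d => Hs.
  have [w' Hw'] := IH1 q w s t r' erefl (ltac:(by rewrite cat_rcons)) Hs.
  by exists w'; rewrite -cat_rcons.
- move=> pre r1 r2 w1 H1 IH1 q w [|d s] t r' El Eq /=.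
    by move=> [<-]; rewrite cats0; exists w; apply: gen_altr; rewrite -El.
  subst w1.
  have [t1 Et1] := mem_child H1 (mem_head q w).
  case: (digit (etrans (esym Et1) Eq)) => ed _; subst d => Hs.
  have [w' Hw'] := IH1 q w s t r' erefl (ltac:(by rewrite cat_rcons)) Hs.
  by exists w'; rewrite -cat_rcons.
- by [].
- move=> pre r w1 w2 H1 IH1 H2 IH2 q w s t r' El Eq.
  case: w1 El H1 IH1 => [|q1 w1] /= El H1 IH1.
    by subst w2; apply: (IH2 q w s t r' erefl Eq).
  case: s Eq => [|d s] Eq /=.
    by move=> [<-]; rewrite cats0; exists w; rewrite -El -cat_cons; apply: gen_starS.
  case: El => e1 e2; subst q1.
  have [t1 Et1] := mem_child H1 (mem_head q w1).
  case: (digit (etrans (esym Et1) Eq)) => ed _; subst d => Hs.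
  have [w' Hw'] := IH1 q w1 s t r' erefl (ltac:(by rewrite cat_rcons)) Hs.
  by exists w'; rewrite -cat_rcons.
Qed.


Lemma mem_rlast (u : seq addr) p : p \in rcons u p.
Proof. by rewrite mem_rcons mem_head. Qed.

Lemma last_down {A} pre (r : re A) l : gen pre r l ->
  forall p u s t r', l = rcons u p -> p = pre ++ s ++ t -> subat r s = Some r' ->
  exists u', gen (pre ++ s) r' (rcons u' p).
Proof.
elim=> {pre r l}.
- by move=> pre p [|??].
- move=> pre c p u s t r' El.
  case: u El => [|x u] /= El; last by move/(congr1 size): El; rewrite /= size_rcons.
  case: El => <-; case: s => [|d s] /=.
    by move=> _ [<-]; rewrite cats0; exists [::]; constructor.
  by move=> _ [].
- move=> pre r1 r2 w1 w2 H1 IH1 H2 IH2 p u [|d s] t r' El Eq /=.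
    by move=> [<-]; rewrite cats0; exists u; rewrite -El; constructor.
  case/lastP: w2 El H2 IH2 => [|w2 p2] El H2 IH2.
    rewrite cats0 in El; subst w1.
    have [t1 Et1] := mem_child H1 (mem_rlast u p).
    case: (digit (etrans (esym Et1) Eq)) => ed _; subst d => Hs.
    have [w' Hw'] := IH1 p u s t r' erefl (ltac:(by rewrite cat_rcons)) Hs.
    by exists w'; rewrite -cat_rcons.
  rewrite -rcons_cat in El; case/rcons_inj: El => e1 e2; subst p2.
  have [t1 Et1] := mem_child H2 (mem_rlast w2 p).
  case: (digit (etrans (esym Et1) Eq)) => ed _; subst d => Hs.
  have [w' Hw'] := IH2 p w2 s t r' erefl (ltac:(by rewrite cat_rcons)) Hs.
  by exists w'; rewrite -cat_rcons.
- move=> pre r1 r2 w1 H1 IH1 p u [|d s] t r' El Eq /=.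
    by move=> [<-]; rewrite cats0; exists u; apply: gen_altl; rewrite -El.
  subst w1.
  have [t1 Et1] := mem_child H1 (mem_rlast u p).
  case: (digit (etrans (esym Et1) Eq)) => ed _; subst d => Hs.
  have [w' Hw'] := IH1 p u s t r' erefl (ltac:(by rewrite cat_rcons)) Hs.
  by exists w'; rewrite -cat_rcons.
- move=> pre r1 r2 w1 H1 IH1 p u [|d s] t r' El Eq /=.
    by move=> [<-]; rewrite cats0; exists u; apply: gen_altr; rewrite -El.
  subst w1.
  have [t1 Et1] := mem_child H1 (mem_rlast u p).
  case: (digit (etrans (esym Et1) Eq)) => ed _; subst d => Hs.
  have [w' Hw'] := IH1 p u s t r' erefl (ltac:(by rewrite cat_rcons)) Hs.
  by exists w'; rewrite -cat_rcons.
- by move=> pre r p [|??].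
- move=> pre r w1 w2 H1 IH1 H2 IH2 p u s t r' El Eq.
  case/lastP: w2 El H2 IH2 => [|w2 p2] El H2 IH2; last first.
    rewrite -rcons_cat in El; case/rcons_inj: El => e1 e2; subst p2.
    by apply: (IH2 p w2 s t r' erefl Eq).
  rewrite cats0 in El; subst w1.
  case: s Eq => [|d s] Eq /=.
    by move=> [<-]; rewrite cats0; exists u; rewrite -[rcons u p]cats0; apply: gen_starS.
  have [t1 Et1] := mem_child H1 (mem_rlast u p).
  case: (digit (etrans (esym Et1) Eq)) => ed _; subst d => Hs.
  have [w' Hw'] := IH1 p u s t r' erefl (ltac:(by rewrite cat_rcons)) Hs.
  by exists w'; rewrite -cat_rcons.
Qed.


Lemma first_up {A} pre (r : re A) l : gen pre r l ->
  forall q w s t r' p w', l = q :: w -> q = pre ++ s ++ t -> subat r s = Some r' ->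
  gen (pre ++ s) r' (p :: w') -> exists w'', gen pre r (p :: w'').
Proof.
elim=> {pre r l}.
- by [].
- move=> pre c q w [|d s] t r' p w' [e1 e2]; subst q w => //=.
  by move=> _ [<-]; rewrite cats0 => H; exists w'.
- move=> pre r1 r2 w1 w2 H1 IH1 H2 IH2 q w [|d s] t r' p w' El Eq /=.
    by move=> [<-]; rewrite cats0 => H; exists w'.
  case: w1 El H1 IH1 => [|q1 w1] /= El H1 IH1.
    subst w2.
    have [t1 Et1] := mem_child H2 (mem_head q w).
    case: (digit (etrans (esym Et1) Eq)) => ed _; subst d => Hs Hg.
    have [w'' Hw''] := IH2 q w s t r' p w' erefl (ltac:(by rewrite cat_rcons)) Hs
      (ltac:(by rewrite cat_rcons)).
    by exists w''; rewrite -[p :: w'']cat0s; constructor.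
  case: El => e1 e2; subst q1.
  have [t1 Et1] := mem_child H1 (mem_head q w1).
  case: (digit (etrans (esym Et1) Eq)) => ed _; subst d => Hs Hg.
  have [w'' Hw''] := IH1 q w1 s t r' p w' erefl (ltac:(by rewrite cat_rcons)) Hs
    (ltac:(by rewrite cat_rcons)).
  by exists (w'' ++ w2); rewrite -cat_cons; constructor.
- move=> pre r1 r2 w1 H1 IH1 q w [|d s] t r' p w' El Eq /=.
    by move=> [<-]; rewrite cats0 => H; exists w'.
  subst w1.
  have [t1 Et1] := mem_child H1 (mem_head q w).
  case: (digit (etrans (esym Et1) Eq)) => ed _; subst d => Hs Hg.
  have [w'' Hw''] := IH1 q w s t r' p w' erefl (ltac:(by rewrite cat_rcons)) Hs
    (ltac:(by rewrite cat_rcons)).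
  by exists w''; apply: gen_altl.
- move=> pre r1 r2 w1 H1 IH1 q w [|d s] t r' p w' El Eq /=.
    by move=> [<-]; rewrite cats0 => H; exists w'.
  subst w1.
  have [t1 Et1] := mem_child H1 (mem_head q w).
  case: (digit (etrans (esym Et1) Eq)) => ed _; subst d => Hs Hg.
  have [w'' Hw''] := IH1 q w s t r' p w' erefl (ltac:(by rewrite cat_rcons)) Hs
    (ltac:(by rewrite cat_rcons)).
  by exists w''; apply: gen_altr.
- by [].
- move=> pre r w1 w2 H1 IH1 H2 IH2 q w s t r' p w' El Eq.
  case: w1 El H1 IH1 => [|q1 w1] /= El H1 IH1.
    by subst w2; apply: (IH2 q w s t r' p w' erefl Eq).
  case: s Eq => [|d s] Eq /=.
    by move=> [<-]; rewrite cats0 => H; exists w'.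
  case: El => e1 e2; subst q1.
  have [t1 Et1] := mem_child H1 (mem_head q w1).
  case: (digit (etrans (esym Et1) Eq)) => ed _; subst d => Hs Hg.
  have [w'' Hw''] := IH1 q w1 s t r' p w' erefl (ltac:(by rewrite cat_rcons)) Hs
    (ltac:(by rewrite cat_rcons)).
  by exists (w'' ++ w2); rewrite -cat_cons; apply: gen_starS.
Qed.

Lemma split3 {T : Type} {u1 u2 w1 w2 : seq T} {x y} :
  u1 ++ u2 = w1 ++ x :: y :: w2 ->
  (exists t, u1 = w1 ++ x :: y :: t /\ w2 = t ++ u2) \/
  (exists t, u2 = t ++ x :: y :: w2 /\ w1 = u1 ++ t) \/
  (u1 = rcons w1 x /\ u2 = y :: w2).
Proof.
elim: u1 w1 => [|c u1 IH] w1 /=.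
  by move=> ->; right; left; exists w1.
case: w1 => [|c' w1] /=.
  case=> ->; case: u1 IH => [|c2 u1] IH /=.
    by move=> ->; right; right.
  by case=> -> <-; left; exists u1.
case=> -> /IH [[t [-> ->]]|[[t [-> ->]]|[-> ->]]].
- by left; exists t.
- by right; left; exists t.
- by right; right.
Qed.


Definition FCAT {A} (R : re A) p q := exists v r1 r2 u u', subat R v = Some (Cat r1 r2) /\
  gen (rcons v 0) r1 (rcons u p) /\ gen (rcons v 1) r2 (q :: u').
Definition FSTAR {A} (R : re A) p q := exists v r1 u u', subat R v = Some (Star r1) /\
  gen v (Star r1) (rcons u p) /\ gen v (Star r1) (q :: u').

Lemma sub1 {A} (r : re A) : subat r [::] = Some r.
Proof. by case: r. Qed.

Lemma subat_child {A} {R r : re A} {pre d r'} : subat R pre = Some r -> subat r [:: d] = Some r' ->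
  subat R (rcons pre d) = Some r'.
Proof. by move=> H1 H2; rewrite -cats1 subat_app H1. Qed.

Lemma follow_split {A} (R : re A) pre r l : gen pre r l -> forall w1 w2 p q,
  l = w1 ++ p :: q :: w2 -> subat R pre = Some r -> FCAT R p q \/ FSTAR R p q.
Proof.
elim=> {pre r l}.
- by move=> pre [|??].
- move=> pre c w1 w2 p q E; have := congr1 (@size addr) E; rewrite size_cat /=.
  by case: w1 {E} => [|? ?] //=; rewrite addnS.
- move=> pre r1 r2 u1 u2 H1 IH1 H2 IH2 w1 w2 p q /split3 [[t [? ?]]|[[t [? ?]]|[? ?]]] HR; subst.
  + exact: (IH1 w1 t p q erefl (subat_child (d:=0) HR (sub1 _))).
  + exact: (IH2 t w2 p q erefl (subat_child (d:=1) HR (sub1 _))).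
  + by left; exists pre, r1, r2, w1, w2.
- move=> pre r1 r2 u H1 IH1 w1 w2 p q El HR.
  exact: (IH1 w1 w2 p q El (subat_child (d:=0) HR (sub1 _))).
- move=> pre r1 r2 u H1 IH1 w1 w2 p q El HR.
  exact: (IH1 w1 w2 p q El (subat_child (d:=1) HR (sub1 _))).
- by move=> pre r [|??].
- move=> pre r u1 u2 H1 IH1 H2 IH2 w1 w2 p q /split3 [[t [? ?]]|[[t [? ?]]|[? ?]]] HR; subst.
  + exact: (IH1 w1 t p q erefl (subat_child (d:=0) HR (sub1 _))).
  + exact: (IH2 t w2 p q erefl HR).
  + right; exists pre, r, w1, w2; split=> //; split=> //.
    by rewrite -[rcons w1 p]cats0; apply: gen_starS => //; constructor.
Qed.


Lemma anc_trans {x y z : addr} : ancestor x y -> ancestor y z -> ancestor x z.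
Proof. by move=> [s ->] [t ->]; exists (s ++ t); rewrite catA. Qed.

Lemma proper_size {x y : addr} : proper_ancestor x y -> size x < size y.
Proof.
move=> [s [ns ->]]; rewrite size_cat; case: s ns => [|??] //= _; lia.
Qed.

Lemma anc_size {x y : addr} : ancestor x y -> size x <= size y.
Proof. by move=> [s ->]; rewrite size_cat leq_addr. Qed.

Lemma maximal (N : addr -> Prop) (F : addr -> addr -> Prop) v : N v ->
  exists u, N u /\ ~ (exists u', N u' /\ (proper_ancestor u' u /\ forall p, F u p -> F u' p)) /\
  (forall p, F v p -> F u p).
Proof.
have: size v <= size v by [].
move: {2}(size v) => n; elim: n v => [|n IH] v Hs Nv.
- case: (classic (exists u', N u' /\ (proper_ancestor u' v /\ forall p, F v p -> F u' p)))
      => [[u' [_ [/proper_size]]]|H]; first lia.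
  by exists v.
- case: (classic (exists u', N u' /\ (proper_ancestor u' v /\ forall p, F v p -> F u' p)))
      => [[u' [Nu' [Hp Hi]]]|H]; last by exists v.
  have Hs' : size u' <= n by have := proper_size Hp; lia.
  have [u [Nu [nd Hi']]] := IH u' Hs' Nu'.
  exists u; split=> //; split=> // p /Hi; exact: Hi'.
Qed.

Lemma lca_cat (v a b : addr) : lca (v ++ a) (v ++ b) = v ++ lca a b.
Proof. by elim: v => //= c v ->; rewrite eqxx. Qed.

Lemma lca_l (x y : addr) : ancestor (lca x y) x.
Proof.
elim: x y => [|c x IH] [|d y] /=.
- by exists [::].
- by exists [::].
- by exists (c :: x).
- case: eqP => _; last by exists (c :: x).
  by have [s E] := IH y; exists s; rewrite /= -E.
Qed.

Lemma lca_r (x y : addr) : ancestor (lca x y) y.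
Proof.
elim: x y => [|c x IH] [|d y] /=.
- by exists [::].
- by exists (d :: y).
- by exists [::].
- case: eqP => [->|_]; last by exists (d :: y).
  by have [s E] := IH y; exists s; rewrite /= -E.
Qed.

Lemma prefix_cmp {x y a b : addr} : x ++ a = y ++ b -> ancestor x y \/ ancestor y x.
Proof.
elim: x y => [|c x IH] [|d y] /=.
- by left; exists [::].
- by left; exists (d :: y).
- by right; exists (c :: x).
- case=> -> /IH [[s ->]|[s ->]]; [left|right]; by exists s.
Qed.

Lemma pstar_self {A} (R : re A) v : is_star R v -> pstar R v v.
Proof.
move=> Hs; split; first by exists [::]; rewrite cats0.
split=> // u' /anc_size H1 /proper_size H2; lia.
Qed.

Lemma pstar_uniq {A} (R : re A) v u : is_star R v -> pstar R v u -> u = v.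
Proof.
move=> Hv [[s Es] [_ H]]; case: s Es => [|c s] Es; first by rewrite Es cats0.
exfalso; apply: (H v) => //; first by exists [::]; rewrite cats0.
by exists (c :: s).
Qed.

Lemma pstar_exists {A} (R : re A) x : forall v, ancestor v x -> is_star R v ->
  exists u, pstar R x u /\ ancestor v u.
Proof.
move=> v; have: size x - size v <= size x - size v by [].
move: {2}(size x - size v) => n; elim: n v => [|n IH] v Hn Hav Hsv.
- case: (classic (exists u', ancestor u' x /\ proper_ancestor v u' /\ is_star R u'))
     => [[u' [/anc_size H1 [/proper_size H2 _]]]|H].
    by have := anc_size Hav; lia.
  exists v; split; last by exists [::]; rewrite cats0.
  split=> //; split=> // u' H1 H2 H3; apply: H; by exists u'.
- case: (classic (exists u', ancestor u' x /\ proper_ancestor v u' /\ is_star R u'))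
     => [[u' [H1 [H2 H3]]]|H].
    have Hn' : size x - size u' <= n.
      by have := anc_size H1; have := proper_size H2; lia.
    have [u [Hu Hau]] := IH u' Hn' H1 H3.
    exists u; split=> //; apply: anc_trans Hau; by case: H2 => s [_ ->]; exists s.
  exists v; split; last by exists [::]; rewrite cats0.
  split=> //; split=> // u' H1 H2 H3; apply: H; by exists u'.
Qed.

Lemma first_inh {A} (R : re A) x y s q : first R x q -> first R y q -> y = x ++ s ->
  forall p, first R y p -> first R x p.
Proof.
move=> [rx [Hx [w Hw]]] [ry [Hy [w2 Hw2]]] Ey p [ry' [Hy' [w' Hw']]].
rewrite Hy in Hy'; case: Hy' => ery; subst ry'.
have [t Et] := gen_pre Hw2 q (mem_head q w2).
have Hs : subat rx s = Some ry by rewrite -(subat_app' _ _ x s Hx) -Ey.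
subst y.
have [w'' Hw''] := @first_up _ _ _ _ Hw q w s t ry p w' erefl (ltac:(by rewrite Et catA)) Hs Hw'.
by exists rx; split=> //; exists w''.
Qed.


Lemma rcons_proper (u v s : addr) x y : rcons v x = rcons u y ++ s -> s <> [::] ->
  proper_ancestor u v.
Proof.
rewrite cat_rcons => E ns; case/lastP: s E ns => [|s0 z] // E _.
rewrite -cats1 -[_ :: rcons s0 z]cat1s -cats1 !catA cats1 cats1 in E.
case/rcons_inj: E => -> _; exists ([:: y] ++ s0); split=> //; by rewrite catA.
Qed.

Arguments pstar_exists {A R x v}.
Arguments pstar_self {A R v}.
Arguments pstar_uniq {A R v u}.
Arguments first_inh {A R x y s q}.
Arguments rcons_proper {u v s x y}.

Lemma embed_follow {A} (R r : re A) v u p q u' : subat R v = Some r ->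
  gen v r (rcons u p ++ q :: u') -> exists w1 w2, gen [::] R (w1 ++ p :: q :: w2).
Proof.
move=> Hv Hg; have [w1 [w2 H]] := embed v R r [::] _ Hv Hg.
exists (w1 ++ u), (u' ++ w2).
by move: H; rewrite cat_rcons -!catA.
Qed.

Theorem lemma3 (A : Type) (R : re A) (P : addr -> Prop) (a : A) :
  (forall p, P p -> Pos R p) ->
  (* (i) *)
  (forall q, delta R P a q <->
     (exists v, Ncat_t R P a v /\ delta_cat R v a q) \/
     (exists v, Nstar_t R P a v /\ delta_star R v a q)) /\
  (* (ii) *)
  (forall u v, Ncat_t R P a u -> Ncat_t R P a v -> u <> v ->
     forall q, ~ (delta_cat R u a q /\ delta_cat R v a q)) /\
  (forall u v, Nstar_t R P a u -> Nstar_t R P a v -> u <> v ->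
     forall q, ~ (delta_star R u a q /\ delta_star R v a q)) /\
  (* (iii) *)
  (forall v, Ncat_t R P a v -> exists q, delta_cat R v a q) /\
  (forall v, Nstar_t R P a v -> exists q, delta_star R v a q).
Proof.
move=> _; split; [|split; [|split; [|split]]].
- move=> q; split.
  + move=> [Hq [p [Pp [w1 [w2 Hg]]]]].
    case: (@follow_split _ R _ _ _ Hg w1 w2 p q erefl (sub1 R)).
    * move=> [v [r1 [r2 [u [u' [HR [G1 G2]]]]]]].
      have Nv : Ncat R P a v.
        split; first by exists r1, r2.
        split; first by exists p; split=> //; exists r1; split;
          [exact: (subat_child (d:=0) HR (sub1 _))|exists u].
        by exists q; split=> //; exists r2; split;
          [exact: (subat_child (d:=1) HR (sub1 _))|exists u'].
      have [u0 [Nu [nd Hi]]] := maximal (Ncat R P a) (fun v => first R (rcons v 1)) v Nv.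
      left; exists u0; split; first by split.
      split=> //; exists q; split=> //; apply: Hi.
      by exists r2; split; [exact: (subat_child (d:=1) HR (sub1 _))|exists u'].
    * move=> [v [r1 [u [u' [HR [G1 G2]]]]]].
      have [tp Ep] := gen_pre G1 p (mem_rlast u p).
      have [tq Eq] := gen_pre G2 q (mem_head q u').
      have Hl : ancestor v (lca p q) by rewrite Ep Eq lca_cat; exists (lca tp tq).
      have [w [Hw [s Es]]] := pstar_exists Hl (ex_intro _ r1 HR).
      have [[s1 E1] [[rw Hrw] _]] := Hw.
      have [t1 Et1] := anc_trans (ex_intro _ s1 E1) (lca_l p q).
      have [t2 Et2] := anc_trans (ex_intro _ s1 E1) (lca_r p q).
      have Hs : subat (Star r1) s = Some (Star rw).
        by rewrite -(subat_app' _ _ v s HR) -Es.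
      have [u2 Hu2] := @last_down _ _ _ _ G1 p u s t1 _ erefl
         (ltac:(by rewrite catA -Es)) Hs.
      have [u3 Hu3] := @first_down _ _ _ _ G2 q u' s t2 _ erefl
         (ltac:(by rewrite catA -Es)) Hs.
      rewrite -Es in Hu2 Hu3.
      have Nw : Nstar R P a w.
        split; first by exists rw.
        split; first by exists p, q.
        split; first by exists p; split=> //; exists (Star rw); split=> //; exists u2.
        by exists q; split=> //; exists (Star rw); split=> //; exists u3.
      have [u0 [Nu [nd Hi]]] := maximal (Nstar R P a) (first R) w Nw.
      right; exists u0; split; first by split.
      split=> //; exists u0; split; first exact: (pstar_self Nu.1).
      exists q; split=> //; apply: Hi.
      by exists (Star rw); split=> //; exists u3.
  + case.
    * move=> [v [[[[r1 [r2 HR]] [[p [Pp [rl [Hl [u Gl]]]]] _]] _] [Hq [q' [e [rr [Hr [u' Gr]]]]]]]].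
      subst q'; split=> //; exists p; split=> //.
      rewrite (subat_child (d:=0) HR (sub1 _)) in Hl; case: Hl => ?; subst rl.
      rewrite (subat_child (d:=1) HR (sub1 _)) in Hr; case: Hr => ?; subst rr.
      exact: (embed_follow R _ v u p q u' HR (gen_cat Gl Gr)).
    * move=> [v [[[[r1 HR] [_ [[p [Pp [rl [Hl [u Gl]]]]] _]]] _] [Hq [u0 [Hps [q' [e [rr [Hr [u' Gr]]]]]]]]]].
      subst q'; split=> //; exists p; split=> //.
      have e0 := pstar_uniq (ex_intro _ r1 HR) Hps; subst u0.
      rewrite HR in Hl; case: Hl => ?; subst rl.
      rewrite HR in Hr; case: Hr => ?; subst rr.
      exact: (embed_follow R _ v u p q u' HR (gen_star_app _ _ _ _ Gl Gr)).
- move=> u v [Nu ndu] [Nv ndv] nuv q [[_ [q1 [e1 Hu]]] [_ [q2 [e2 Hv]]]]; subst q1 q2.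
  have [tu Eu] : exists t, q = rcons u 1 ++ t.
    by case: Hu => r [_ [w Hw]]; exact: gen_pre Hw q (mem_head q w).
  have [tv Ev] : exists t, q = rcons v 1 ++ t.
    by case: Hv => r [_ [w Hw]]; exact: gen_pre Hw q (mem_head q w).
  case: (prefix_cmp (etrans (esym Eu) Ev)) => [[s Es]|[s Es]].
  + apply: ndv; exists u; split=> //; split.
      apply: (rcons_proper Es) => ?; subst s; apply: nuv.
      by move: Es; rewrite cats0 => /rcons_inj [].
    exact: first_inh Hu Hv Es.
  + apply: ndu; exists v; split=> //; split.
      apply: (rcons_proper Es) => ?; subst s; apply: nuv.
      by move: Es; rewrite cats0 => /rcons_inj [].
    exact: first_inh Hv Hu Es.
- move=> u v [Nu ndu] [Nv ndv] nuv q [[_ [u1 [Hp1 [q1 [e1 Hu]]]]] [_ [v1 [Hp2 [q2 [e2 Hv]]]]]].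
  subst q1 q2.
  have eu := pstar_uniq Nu.1 Hp1; have ev := pstar_uniq Nv.1 Hp2; subst u1 v1.
  have [tu Eu] : exists t, q = u ++ t.
    by case: Hu => r [_ [w Hw]]; exact: gen_pre Hw q (mem_head q w).
  have [tv Ev] : exists t, q = v ++ t.
    by case: Hv => r [_ [w Hw]]; exact: gen_pre Hw q (mem_head q w).
  case: (prefix_cmp (etrans (esym Eu) Ev)) => [[s Es]|[s Es]].
  + apply: ndv; exists u; split=> //; split.
      exists s; split=> // ?; subst s; apply: nuv; by rewrite Es cats0.
    exact: first_inh Hu Hv Es.
  + apply: ndu; exists v; split=> //; split.
      exists s; split=> // ?; subst s; apply: nuv; by rewrite Es cats0.
    exact: first_inh Hv Hu Es.
- move=> v [[_ [_ [q [Hq Hf]]]] _]; exists q; split=> //; by exists q.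
- move=> v [[Hs [_ [_ [q [Hq Hf]]]]] _]; exists q; split=> //.
  exists v; split; first exact: pstar_self.
  by exists q.
Qed.
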